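(* Let $G$ be an undirected, connected graph on $N\ge2$ vertices with Laplacian $L$ and degree matrix $D=\operatorname{diag}(|\mathcal N_1|,\dots,|\mathcal N_N|)$. Fix weights $w_1,w_2,w_3>0$. For $h>0$ define \[ a^h=\frac{w_1h^2}{2\left(w_3+w_2h^2+w_1\frac{h^4}{4}\right)},\qquad b^h=\frac{w_2h+w_1\frac{h^3}{2}}{w_3+w_2h^2+w_1\frac{h^4}{4}}, \] and for an eigenvalue $\lambda_i$ of $D^{-1}L$ define \[ Q_i^h=\begin{bmatrix}1-\frac{h^2}{2}a^h\lambda_i & h-\frac{h^2}{2}b^h\\ -ha^h\lambda_i & 1-hb^h\end{bmatrix}. \] Then for every eigenvalue $\lambda_i>0$ of $D^{-1}L$ there exists $h_i>0$ such that $\rho(Q_i^h)<1$ for all $h\in(0,h_i)$, where $\rho$ denotes the spectral radius.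
   Context: $\mathcal N_i$ is the set of neighbors of vertex $i$ and $|\mathcal N_i|$ its degree. Since the graph is connected, $D$ is invertible. The eigenvalues of $D^{-1}L$ are real and satisfy $0=\lambda_1<\lambda_2\le\dots\le\lambda_N\le2$. *)

(* Defs.v *)
From HB Require Import structures.
From mathcomp Require Import all_boot all_order all_algebra.
From mathcomp Require Import complex.
Set Implicit Arguments. Unset Strict Implicit. Unset Printing Implicit Defensive.
Import Order.TTheory GRing.Theory Num.Theory.
Local Open Scope ring_scope.

Definition simple_graph (N : nat) (e : rel 'I_N) : Prop :=
  (forall i j, e i j = e j i) /\ (forall i, e i i = false).

Definition connected_graph (N : nat) (e : rel 'I_N) : Prop :=
  forall i j, connect e i j.

Definition degree (N : nat) (e : rel 'I_N) (i : 'I_N) : nat := #|[set j | e i j]|.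

Definition adjacency_mx (R : nzRingType) (N : nat) (e : rel 'I_N) : 'M[R]_N :=
  \matrix_(i, j) (e i j)%:R.

Definition degree_mx (R : nzRingType) (N : nat) (e : rel 'I_N) : 'M[R]_N :=
  \matrix_(i, j) ((i == j)%:R * (degree e i)%:R).

Definition laplacian_mx (R : nzRingType) (N : nat) (e : rel 'I_N) : 'M[R]_N :=
  degree_mx R e - adjacency_mx R e.

(* Complex roots (with multiplicity) of the characteristic polynomial of a real
   matrix, i.e. its complex eigenvalues. *)
Definition cmx_eigenvalues (R : rcfType) (n : nat) (A : 'M[R]_n) : seq R[i] :=
  sval (closed_field_poly_normal (char_poly (map_mx (fun x : R => (x%:C)%C) A))).

Definition spectral_radius (R : rcfType) (n : nat) (A : 'M[R]_n) : R :=
  \big[Num.max/0]_(z <- cmx_eigenvalues A) Normc.normc z.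

Definition a_h (R : fieldType) (w1 w2 w3 h : R) : R :=
  w1 * h ^+ 2 / (2 * (w3 + w2 * h ^+ 2 + w1 * h ^+ 4 / 4)).

Definition b_h (R : fieldType) (w1 w2 w3 h : R) : R :=
  (w2 * h + w1 * h ^+ 3 / 2) / (w3 + w2 * h ^+ 2 + w1 * h ^+ 4 / 4).

Definition mx2 (R : Type) (a b c d : R) : 'M[R]_2 :=
  \matrix_(i < 2, j < 2)
    (if (i : nat) == 0%N then (if (j : nat) == 0%N then a else b)
     else (if (j : nat) == 0%N then c else d)).

Definition Q_h (R : fieldType) (w1 w2 w3 h lam : R) : 'M[R]_2 :=
  let a := a_h w1 w2 w3 h in let b := b_h w1 w2 w3 h in
  mx2 (1 - h ^+ 2 / 2 * a * lam) (h - h ^+ 2 / 2 * b)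
      (- (h * a * lam))         (1 - h * b).

(* Main.v *)
Require Import Defs.
From HB Require Import structures.
From mathcomp Require Import all_boot all_order all_algebra.
From mathcomp Require Import complex ring lra.
Import Order.TTheory GRing.Theory Num.Theory.
Local Open Scope ring_scope.

Lemma det2 (K : comNzRingType) (M : 'M[K]_2) : \det M = M 0 0 * M 1 1 - M 0 1 * M 1 0.
Proof.
rewrite (expand_det_row M 0) !big_ord_recl big_ord0 /cofactor !det_mx11 !mxE /=.
have -> : lift 0 (0 : 'I_1) = 1 :> 'I_2 by apply/val_inj.
have -> : lift (1 : 'I_2) (0 : 'I_1) = 0 :> 'I_2 by apply/val_inj.
have -> : (ord0 : 'I_2) = 0 by apply/val_inj.
rewrite /= expr0 expr1 addr0; ring.
Qed.

Lemma eig_root (R : rcfType) (A : 'M[R]_2) (z : R[i]) :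
  z \in cmx_eigenvalues A ->
  ((z - (A 0 0)%:C) * (z - (A 1 1)%:C) - (A 0 1)%:C * (A 1 0)%:C)%C = 0.
Proof.
rewrite /cmx_eigenvalues; case: closed_field_poly_normal => r /= Hr zr.
set B := map_mx _ A in Hr.
have : root (char_poly B) z.
  rewrite Hr rootZ ?root_prod_XsubC //.
  by rewrite lead_coef_eq0 monic_neq0 // char_poly_monic.
rewrite /root /char_poly -horner_evalE -det_map_mx det2 => /eqP <-.
rewrite /char_poly_mx !(mxE, horner_evalE) /= !hornerE /=.
rewrite !horner_evalE !hornerE /=; ring.
Qed.

Lemma quad_small (R : rcfType) (a b c d : R) (z : R[i]) :
  ((z - a%:C) * (z - d%:C) - b%:C * c%:C)%C = 0 ->
  a * d - b * c < 1 -> 0 < 1 - (a + d) + (a * d - b * c) -> 0 < 1 + (a + d) + (a * d - b * c) ->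
  Normc.normc z < 1.
Proof.
case: z => x y /eqP; rewrite eq_complex /= => /andP[/eqP E1 /eqP E2] h1 h2 h3.
rewrite -sqrtr1 ltr_sqrt ?ltr01 //.
have [y0|yn0] := eqVneq y 0.
  subst y; rewrite (_ : (0:R)^+2 = 0) ?addr0; last by rewrite expr2 mulr0.
  set x' := a + d - x.
  have ED : a * d - b * c = x * x' by rewrite /x'; nra.
  rewrite ED in h1 h2 h3.
  have e2 : 1 - (a + d) + x * x' = (1 - x) * (1 - x') by rewrite /x'; ring.
  have e3 : 1 + (a + d) + x * x' = (1 + x) * (1 + x') by rewrite /x'; ring.
  rewrite e2 in h2; rewrite e3 in h3.
  have hx1 : x < 1.
    rewrite ltNge; apply/negP => hx.
    have : 1 < x' by nra.
    nra.
  have hx2 : -1 < x.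
    rewrite ltNge; apply/negP => hx.
    have : x' < -1 by nra.
    nra.
  nra.
have ex : 2 * x - (a + d) = 0.
  have : y * (2 * x - (a + d)) = 0 by rewrite -E2; ring.
  by move/eqP; rewrite mulf_eq0 (negbTE yn0) /= => /eqP.
have : x^+2 + y^+2 - (a*d - b*c) = - ((x - a) * (x - d) - (y - 0) * (y - 0) - (b * c - 0 * 0)) + x * (2*x - (a+d)) by ring.
rewrite E1 ex oppr0 mulr0 addr0 => /eqP; rewrite subr_eq0 => /eqP ->.
exact: h1.
Qed.
Lemma Qfacts (R : rcfType) (w1 w2 w3 h lam : R) (hw1 : 0 < w1) (hw2 : 0 < w2) (hw3 : 0 < w3)
  (hl : 0 < lam) (h0 : 0 < h) (hs : w1 * lam * h ^+ 2 < w2) :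
  let A := Q_h w1 w2 w3 h lam in
  A 0 0 * A 1 1 - A 0 1 * A 1 0 < 1 /\
  0 < 1 - (A 0 0 + A 1 1) + (A 0 0 * A 1 1 - A 0 1 * A 1 0) /\
  0 < 1 + (A 0 0 + A 1 1) + (A 0 0 * A 1 1 - A 0 1 * A 1 0).
Proof.
rewrite /= /Q_h /mx2 !mxE /=.
set a := a_h w1 w2 w3 h; set b := b_h w1 w2 w3 h.
set S := w3 + w2 * h ^+ 2 + w1 * h ^+ 4 / 4.
have h2 : 0 < h ^+ 2 by apply: exprn_gt0.
have h4 : h ^+ 4 = h ^+ 2 * h ^+ 2 by rewrite -exprD.
have h4p : 0 < h ^+ 4 by apply: exprn_gt0.
have P1 : 0 < w2 * h ^+ 2 by apply: mulr_gt0.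
have P3 : 0 < w1 * h ^+ 4 by apply: mulr_gt0.
have P2 : 0 < w1 * lam * h ^+ 4 by apply: mulr_gt0 => //; apply: mulr_gt0.
have P4 : w1 * lam * h ^+ 4 < w2 * h ^+ 2 by rewrite h4 mulrA ltr_pM2r.
have Sp : 0 < S by rewrite /S; lra.
have S0 : S != 0 by rewrite gt_eqF.
have pS : h * b * S = w2 * h ^+ 2 + w1 * h ^+ 4 / 2 by rewrite /b /b_h -/S; field.
have qS : h ^+ 2 * a * lam * S = w1 * lam * h ^+ 4 / 2 by rewrite /a /a_h -/S; field.
have q0 : 0 < h ^+ 2 * a * lam.
  rewrite -(ltr_pM2r Sp) mul0r qS; lra.
have p2 : h * b < 2.
  rewrite -(ltr_pM2r Sp) pS /S; lra.
have qp : h ^+ 2 * a * lam < 2 * (h * b).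
  rewrite -(ltr_pM2r Sp) qS -[2 * (h * b) * S]mulrA pS; lra.
have eD : (1 - h ^+ 2 / 2 * a * lam) * (1 - h * b) - (h - h ^+ 2 / 2 * b) * - (h * a * lam)
   = 1 - h * b + (h ^+ 2 * a * lam) / 2 by field.
have eT : (1 - h ^+ 2 / 2 * a * lam) + (1 - h * b) = 2 - (h ^+ 2 * a * lam) / 2 - h * b by field.
rewrite eD eT; lra.
Qed.

Theorem lemma1 (R : rcfType) (N : nat) (e : rel 'I_N)
  (hN : (2 <= N)%N) (hsimple : simple_graph e) (hconn : connected_graph e)
  (w1 w2 w3 : R) (hw1 : 0 < w1) (hw2 : 0 < w2) (hw3 : 0 < w3) :
  forall lam : R,
    eigenvalue (invmx (degree_mx R e) *m laplacian_mx R e) lam -> 0 < lam ->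
    exists hi : R, 0 < hi /\
      forall h : R, 0 < h -> h < hi -> spectral_radius (Q_h w1 w2 w3 h lam) < 1.
Proof.
move=> lam _ hl.
have kp : 0 < w1 * lam + w2 by apply: addr_gt0 => //; apply: mulr_gt0.
exists (w2 / (w1 * lam + w2)); split; first by apply: divr_gt0.
move=> h h0 hh.
have hk : h * (w1 * lam + w2) < w2 by rewrite -ltr_pdivlMr.
have h1 : h < 1 by nra.
have hs : w1 * lam * h ^+ 2 < w2.
  have : w1 * lam * h < w2 by nra.
  have : 0 < w1 * lam by apply: mulr_gt0.
  rewrite expr2; nra.
have [f1 [f2 f3]] := @Qfacts R w1 w2 w3 h lam hw1 hw2 hw3 hl h0 hs.
rewrite /spectral_radius big_seq.
apply: (big_ind (fun x => x < 1)) => // [x y hx hy|z hz].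
  by rewrite gt_max hx hy.
exact: (@quad_small R _ _ _ _ _ (@eig_root R _ z hz)).
Qed.
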